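(* A causal graph dynamics $F:\mathcal{G}_{\Sigma,\Delta,\pi}\to\mathcal{G}_{\Sigma,\Delta,\pi}$ is monotonic for the subgraph order (i.e. $G\subseteq H$ implies $F(G)\subseteq F(H)$) if and only if $F$ admits a local rule (of some radius $r$) which is monotonic from the subdisk order on $\mathcal{D}^r_{\Sigma,\Delta,\pi}$ to the subgraph order on $\mathcal{G}_{\Sigma,\Delta,\pi}$.
   Context: Fix an uncountably infinite set $\mathcal{V}$ of vertex names, sets $\Sigma,\Delta$ and a finite set $\pi$ of ports. A graph $G$ consists of a countable set $V(G)\subset\mathcal{V}$; a set $E(G)$ of pairwise disjoint two-element subsets of $V(G)\times\pi$ (write $u\!:\!i$ for $(u,i)$); partial functions $\sigma(G):V(G)\rightharpoonup\Sigma$, $\delta(G):E(G)\rightharpoonup\Delta$. $\mathcal{G}_{\Sigma,\Delta,\pi}$ is the set of such graphs. Subgraph order: $G\subseteq H$ iff $V(G)\subseteq V(H)$, $E(G)\subseteq E(H)$, $\sigma(G)\subseteq\sigma(H)$, $\delta(G)\subseteq\delta(H)$ (partial functions as sets of pairs); on pointed graphs $(G,v)\subseteq(H,u)$ iff $G\subseteq H$ and $v=u$ (the subdisk order on disks). Graphs $G,H$ are consistent if $E(G)\cup E(H)$ consists of pairwise disjoint two-element sets and the $\sigma$'s, resp. $\delta$'s, agree where both defined; then $G\cup H$ is the componentwise union; intersections are componentwise; $\varnothing$ is the empty graph. $d_G$ is shortest-path distance (consecutive path vertices joined by an edge via some ports), $B_G(c,r)=\{u\mid d_G(c,u)\le r\}$.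 The disk $G^r_c=(H,c)$ has $V(H)=B_G(c,r+1)$, $E(H)$ the edges of $G$ with at least one endpoint in $B_G(c,r)$, $\sigma(H)=\sigma(G)|_{B_G(c,r)}$, $\delta(H)=\delta(G)|_{E(H)}$; $\mathcal{D}^r_{\Sigma,\Delta,\pi}$ is the set of all such disks of radius $r$. A renaming is a bijection $R$ of $\mathcal{V}$ acting on edges, graphs ($V(R(G))=R(V(G))$, $E(R(G))=R(E(G))$, $\sigma(R(G))=\sigma(G)\circ R^{-1}$, $\delta(R(G))=\delta(G)\circ R^{-1}$) and pointed graphs. A local rule of radius $r$ is $f:\mathcal{D}^r_{\Sigma,\Delta,\pi}\to\mathcal{G}_{\Sigma,\Delta,\pi}$ with (1) for each renaming $R$ some renaming $R'$ with $f\circ R=R'\circ f$; (2) $\bigcap_k H_k=\varnothing\Rightarrow\bigcap_k f((H_k,v_k))=\varnothing$ for any family of radius-$r$ disks; (3) a uniform bound on $|V(f(D))|$; (4) $f(G^r_u),f(G^r_v)$ consistent for all $G$, $u,v\in V(G)$. A CGD is $F$ with $F(G)=\bigcup_{v\in V(G)}f(G^r_v)$ for some local rule $f$ of some radius $r$; such $f$ is called a local rule of $F$. *)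

(* Defs.v *)
From Stdlib Require Import List Arith.

Set Implicit Arguments.

Section CGD.

Variables (VN Sigma Delta Pi : Type).

Definition port := (VN * Pi)%type.

(* A (pre)graph.  Edges are two-element sets {p,q} of ports, encoded as a
   symmetric relation gE p q ("{p,q} is an edge").  Partial functions are
   encoded as sets of pairs (functional relations). *)
Record graph := mkGraph {
  gV : VN -> Prop;
  gE : port -> port -> Prop;
  gsig : VN -> Sigma -> Prop;
  gdel : port -> port -> Delta -> Prop
}.

Definition countable_set (P : VN -> Prop) : Prop :=
  exists g : VN -> nat, forall u v, P u -> P v -> g u = g v -> u = v.

Definition wf (G : graph) : Prop :=
  countable_set (gV G) /\
  (forall p q, gE G p q -> gV G (fst p) /\ gV G (fst q)) /\
  (forall p q, gE G p q -> p <> q) /\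
  (forall p q, gE G p q -> gE G q p) /\
  (* edges pairwise disjoint *)
  (forall p q q', gE G p q -> gE G p q' -> q = q') /\
  (forall v s, gsig G v s -> gV G v) /\
  (forall v s s', gsig G v s -> gsig G v s' -> s = s') /\
  (forall p q d, gdel G p q d -> gE G p q) /\
  (forall p q d, gdel G p q d -> gdel G q p d) /\
  (forall p q d d', gdel G p q d -> gdel G p q d' -> d = d').

Definition subg (G H : graph) : Prop :=
  (forall u, gV G u -> gV H u) /\
  (forall p q, gE G p q -> gE H p q) /\
  (forall v s, gsig G v s -> gsig H v s) /\
  (forall p q d, gdel G p q d -> gdel H p q d).

Definition pgraph := (graph * VN)%type.

Definition subpg (D1 D2 : pgraph) : Prop :=
  subg (fst D1) (fst D2) /\ snd D1 = snd D2.

Definition consistent (G H : graph) : Prop :=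
  (forall p q q', (gE G p q \/ gE H p q) -> (gE G p q' \/ gE H p q') -> q = q') /\
  (forall v s s', gsig G v s -> gsig H v s' -> s = s') /\
  (forall p q d d', gdel G p q d -> gdel H p q d' -> d = d').

Definition empty_graph : graph :=
  mkGraph (fun _ => False) (fun _ _ => False) (fun _ _ => False) (fun _ _ _ => False).

Definition bigcap (I : Type) (Gs : I -> graph) : graph :=
  mkGraph (fun u => forall i, gV (Gs i) u)
          (fun p q => forall i, gE (Gs i) p q)
          (fun v s => forall i, gsig (Gs i) v s)
          (fun p q d => forall i, gdel (Gs i) p q d).

Definition bigcup (I : Type) (P : I -> Prop) (Gs : I -> graph) : graph :=
  mkGraph (fun u => exists i, P i /\ gV (Gs i) u)
          (fun p q => exists i, P i /\ gE (Gs i) p q)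
          (fun v s => exists i, P i /\ gsig (Gs i) v s)
          (fun p q d => exists i, P i /\ gdel (Gs i) p q d).

Definition adj (G : graph) (u v : VN) : Prop :=
  exists i j, gE G (u, i) (v, j).

Fixpoint ball (G : graph) (c : VN) (n : nat) (u : VN) : Prop :=
  match n with
  | O => gV G c /\ u = c
  | S m => ball G c m u \/ exists w, ball G c m w /\ adj G w u
  end.

Definition disk_graph (G : graph) (r : nat) (c : VN) : graph :=
  mkGraph (fun u => ball G c (S r) u)
          (fun p q => gE G p q /\ (ball G c r (fst p) \/ ball G c r (fst q)))
          (fun v s => gsig G v s /\ ball G c r v)
          (fun p q d => gdel G p q d /\ (ball G c r (fst p) \/ ball G c r (fst q))).

Definition disk (G : graph) (r : nat) (c : VN) : pgraph := (disk_graph G r c, c).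

Definition is_disk (r : nat) (D : pgraph) : Prop :=
  exists G c, wf G /\ gV G c /\ D = disk G r c.

Record renaming := mkRenaming {
  rn : VN -> VN;
  rn_inv : VN -> VN;
  rn_K : forall x, rn (rn_inv x) = x;
  rn_Ki : forall x, rn_inv (rn x) = x
}.

Definition rn_port (R : renaming) (p : port) : port := (rn_inv R (fst p), snd p).

Definition rename (R : renaming) (G : graph) : graph :=
  mkGraph (fun u => gV G (rn_inv R u))
          (fun p q => gE G (rn_port R p) (rn_port R q))
          (fun v s => gsig G (rn_inv R v) s)
          (fun p q d => gdel G (rn_port R p) (rn_port R q) d).

Definition rename_pg (R : renaming) (D : pgraph) : pgraph :=
  (rename R (fst D), rn R (snd D)).

Definition card_le (P : VN -> Prop) (n : nat) : Prop :=
  exists l : list VN, length l <= n /\ forall u, P u -> In u l.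

Definition local_rule (r : nat) (f : pgraph -> graph) : Prop :=
  (forall D, is_disk r D -> wf (f D)) /\
  (forall R : renaming, exists R' : renaming,
      forall D, is_disk r D -> f (rename_pg R D) = rename R' (f D)) /\
  (forall (I : Type) (Ds : I -> pgraph),
      (forall k, is_disk r (Ds k)) ->
      bigcap (fun k => fst (Ds k)) = empty_graph ->
      bigcap (fun k => f (Ds k)) = empty_graph) /\
  (exists n, forall D, is_disk r D -> card_le (gV (f D)) n) /\
  (forall G u v, wf G -> gV G u -> gV G v ->
      consistent (f (disk G r u)) (f (disk G r v))).

Definition local_rule_of (F : graph -> graph) (r : nat) (f : pgraph -> graph) : Prop :=
  local_rule r f /\
  forall G, wf G -> F G = bigcup (gV G) (fun v => f (disk G r v)).

Definition is_CGD (F : graph -> graph) : Prop :=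
  exists r f, local_rule_of F r f.

Definition monotonic_F (F : graph -> graph) : Prop :=
  forall G H, wf G -> wf H -> subg G H -> subg (F G) (F H).

Definition monotonic_rule (r : nat) (f : pgraph -> graph) : Prop :=
  forall D1 D2, is_disk r D1 -> is_disk r D2 -> subpg D1 D2 -> subg (f D1) (f D2).

End CGD.

Arguments empty_graph {VN Sigma Delta Pi}.

(* Main.v *)
Require Import Defs.
From Stdlib Require Import List Arith Lia.
From Stdlib Require Import Classical ClassicalEpsilon FunctionalExtensionality PropExtensionality.

Set Implicit Arguments.

Section Aux.
Variables (VN Sigma Delta Pi : Type).
Local Notation G_ := (graph VN Sigma Delta Pi).
Local Notation PG_ := (pgraph VN Sigma Delta Pi).

Lemma graph_ext (G H : G_) :
  (forall u, gV G u <-> gV H u) ->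
  (forall p q, gE G p q <-> gE H p q) ->
  (forall v s, gsig G v s <-> gsig H v s) ->
  (forall p q d, gdel G p q d <-> gdel H p q d) -> G = H.
Proof.
  destruct G as [a b c d], H as [a' b' c' d']; simpl; intros H1 H2 H3 H4.
  f_equal; repeat (apply functional_extensionality; intro); apply propositional_extensionality; auto.
Qed.

Lemma subg_refl (G : G_) : subg G G.
Proof. repeat split; auto. Qed.

Lemma subg_trans (A B C : G_) : subg A B -> subg B C -> subg A C.
Proof. intros (a1&a2&a3&a4) (b1&b2&b3&b4); repeat split; auto. Qed.

Lemma subg_antisym (A B : G_) : subg A B -> subg B A -> A = B.
Proof. intros (a1&a2&a3&a4) (b1&b2&b3&b4); apply graph_ext; split; auto. Qed.

Lemma subpg_refl (D : PG_) : subpg D D.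
Proof. split; [apply subg_refl|reflexivity]. Qed.

Lemma subpg_trans (A B C : PG_) : subpg A B -> subpg B C -> subpg A C.
Proof. intros [h1 e1] [h2 e2]; split; [eapply subg_trans; eauto| congruence]. Qed.

Lemma sub_bigcup (I : Type) (P : I -> Prop) (Gs : I -> G_) i :
  P i -> subg (Gs i) (bigcup P Gs).
Proof. intros Hi; repeat split; simpl; intros; exists i; auto. Qed.

Lemma bigcup_lub (I : Type) (P : I -> Prop) (Gs : I -> G_) W :
  (forall i, P i -> subg (Gs i) W) -> subg (bigcup P Gs) W.
Proof.
  intros H; repeat split; simpl; intros;
  match goal with h : exists _, _ |- _ => destruct h as (i & Pi' & Hx) end;
  destruct (H i Pi') as (a1&a2&a3&a4); auto.
Qed.

Lemma wf_intro (G : G_) :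
  countable_set (gV G) ->
  (forall p q, gE G p q -> gV G (fst p) /\ gV G (fst q)) ->
  (forall p q, gE G p q -> p <> q) ->
  (forall p q, gE G p q -> gE G q p) ->
  (forall p q q', gE G p q -> gE G p q' -> q = q') ->
  (forall v s, gsig G v s -> gV G v) ->
  (forall v s s', gsig G v s -> gsig G v s' -> s = s') ->
  (forall p q d, gdel G p q d -> gE G p q) ->
  (forall p q d, gdel G p q d -> gdel G q p d) ->
  (forall p q d d', gdel G p q d -> gdel G p q d' -> d = d') -> wf G.
Proof. intros; unfold wf; tauto. Qed.

Ltac dwf H := destruct H as (?&?&?&?&?&?&?&?&?&?).

Lemma wf_count (G : G_) : wf G -> countable_set (gV G).
Proof. intro H; dwf H; assumption. Qed.
Lemma wf_EV (G : G_) : wf G -> forall p q, gE G p q -> gV G (fst p) /\ gV G (fst q).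
Proof. intro H; dwf H; assumption. Qed.
Lemma wf_Eirr (G : G_) : wf G -> forall p q, gE G p q -> p <> q.
Proof. intro H; dwf H; assumption. Qed.
Lemma wf_Esym (G : G_) : wf G -> forall p q, gE G p q -> gE G q p.
Proof. intro H; dwf H; assumption. Qed.
Lemma wf_Efun (G : G_) : wf G -> forall p q q', gE G p q -> gE G p q' -> q = q'.
Proof. intro H; dwf H; assumption. Qed.
Lemma wf_sV (G : G_) : wf G -> forall v s, gsig G v s -> gV G v.
Proof. intro H; dwf H; assumption. Qed.
Lemma wf_sfun (G : G_) : wf G -> forall v s s', gsig G v s -> gsig G v s' -> s = s'.
Proof. intro H; dwf H; assumption. Qed.
Lemma wf_dE (G : G_) : wf G -> forall p q d, gdel G p q d -> gE G p q.
Proof. intro H; dwf H; assumption. Qed.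
Lemma wf_dsym (G : G_) : wf G -> forall p q d, gdel G p q d -> gdel G q p d.
Proof. intro H; dwf H; assumption. Qed.
Lemma wf_dfun (G : G_) : wf G -> forall p q d d', gdel G p q d -> gdel G p q d' -> d = d'.
Proof. intro H; dwf H; assumption. Qed.

Lemma adj_mono (G H : G_) w u : subg G H -> adj G w u -> adj H w u.
Proof. intros (a1&a2&a3&a4) (i&j&h); exists i, j; auto. Qed.

Lemma ball_mono (G H : G_) c k u : subg G H -> ball G c k u -> ball H c k u.
Proof.
  intros S; revert u; induction k as [|k IH]; simpl; intros u Hb.
  - destruct S as (a1&_); destruct Hb; split; auto.
  - destruct Hb as [Hb|(w&Hw&Ha)]; [left; auto| right; exists w; split; eauto using adj_mono].
Qed.

Lemma ball_le (G : G_) c k k' u : k <= k' -> ball G c k u -> ball G c k' u.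
Proof. induction 1; simpl; auto. Qed.

Lemma ball_center (G : G_) c k u : ball G c k u -> gV G c.
Proof.
  revert u; induction k; simpl; intros u Hb; [tauto|].
  destruct Hb as [Hb|(w&Hw&_)]; eauto.
Qed.

Lemma ball_V (G : G_) c k u : wf G -> ball G c k u -> gV G u.
Proof.
  intros W; revert u; induction k; simpl; intros u Hb.
  - destruct Hb; subst; auto.
  - destruct Hb as [Hb|(w&Hw&(i&j&He))]; eauto.
    apply (wf_EV W) in He; simpl in He; tauto.
Qed.

Lemma disk_sub (G : G_) r c : wf G -> subg (disk_graph G r c) G.
Proof.
  intro W; split; [intros u Hu; eapply ball_V; [exact W|exact Hu]|].
  repeat split; simpl; intros; tauto.
Qed.


Lemma disk_mono (G H : G_) r c : subg G H -> subg (disk_graph G r c) (disk_graph H r c).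
Proof.
  intros S; pose proof S as (a1&a2&a3&a4).
  split; [intros u Hu; eapply ball_mono; [exact S|exact Hu]|].
  repeat split; intros; simpl in *;
  match goal with h : _ /\ _ |- _ => destruct h as [h1 h2] end; auto;
  try (destruct h2 as [h2|h2]; [left|right]; exact (ball_mono _ _ _ S h2)).
  exact (ball_mono _ _ _ S h2).
Qed.

Lemma ball0 (G : G_) c k : gV G c -> ball G c k c.
Proof. intro h; apply (ball_le G c (k:=0) (k':=k) c); [lia| simpl; auto]. Qed.

Lemma disk_center (G : G_) r c : gV G c -> gV (disk_graph G r c) c.
Proof. intro h; change (ball G c (S r) c); apply ball0; auto. Qed.

Lemma disk_wf (G : G_) r c : wf G -> wf (disk_graph G r c).
Proof.
  intro W; pose proof (disk_sub r c W) as (s1&s2&s3&s4).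
  apply wf_intro.
  - destruct (wf_count W) as [g hg]; exists g; intros u v hu hv; apply hg; auto.
  - intros [p1 i] [q1 j] [h hb]; simpl in *.
    destruct hb as [hb|hb]; split.
    + left; auto.
    + right; exists p1; split; auto; exists i, j; auto.
    + right; exists q1; split; auto; exists j, i; apply (wf_Esym W); auto.
    + left; auto.
  - intros p q [h _]; eapply (wf_Eirr W); eauto.
  - intros p q [h hb]; split; [eapply (wf_Esym W); eauto| tauto].
  - intros p q q' [h _] [h' _]; eapply (wf_Efun W); eauto.
  - intros v s [h hb]; simpl; left; auto.
  - intros v s s' [h _] [h' _]; eapply (wf_sfun W); eauto.
  - intros p q d [h hb]; split; auto; eapply (wf_dE W); eauto.
  - intros p q d [h hb]; split; [eapply (wf_dsym W); eauto| tauto].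
  - intros p q d d' [h _] [h' _]; eapply (wf_dfun W); eauto.
Qed.

Lemma ball_disk (K : G_) r c k u : gV K c -> k <= S r ->
  (ball (disk_graph K r c) c k u <-> ball K c k u).
Proof.
  intros hc; revert u; induction k as [|k IH]; intros u hk; split; intro hb.
  - simpl in *; destruct hb as [_ e]; subst; auto.
  - destruct hb as [_ e]; subst; split; [apply disk_center; auto| auto].
  - destruct hb as [hb|(w&hw&(i&j&he))].
    + left; apply IH; [lia| auto].
    + right; exists w; split; [apply IH; [lia|auto]|]. exists i, j; apply he.
  - destruct hb as [hb|(w&hw&(i&j&he))].
    + left; apply IH; [lia| auto].
    + right; exists w; split; [apply IH; [lia|auto]|]. exists i, j; split; auto.
      left; simpl; apply (ball_le K c (k:=k) (k':=r) w); [lia|auto].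
Qed.

Lemma disk_self (K : G_) r c : gV K c -> disk_graph (disk_graph K r c) r c = disk_graph K r c.
Proof.
  intro hc; apply graph_ext; cbn [gV gE gsig gdel disk_graph]; intros.
  - apply ball_disk; auto.
  - rewrite !ball_disk by (auto; lia); tauto.
  - rewrite !ball_disk by (auto; lia); tauto.
  - rewrite !ball_disk by (auto; lia); tauto.
Qed.

Lemma is_disk_wf r (D : PG_) : is_disk r D -> wf (fst D).
Proof. intros (G&c&W&hc&->); simpl; apply disk_wf; auto. Qed.

Lemma is_disk_center r (D : PG_) : is_disk r D -> gV (fst D) (snd D).
Proof. intros (G&c&W&hc&->); simpl; apply disk_center; auto. Qed.

Lemma is_disk_self r (D : PG_) : is_disk r D -> disk (fst D) r (snd D) = D.
Proof. intros (G&c&W&hc&->); unfold disk; simpl; rewrite disk_self; auto. Qed.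

Lemma is_disk_intro r (G : G_) c : wf G -> gV G c -> is_disk r (disk G r c).
Proof. intros; exists G, c; auto. Qed.


Lemma rn_inv_inj (R : renaming VN) x y : rn_inv R x = rn_inv R y -> x = y.
Proof. intro e; rewrite <- (rn_K R x), e, rn_K; reflexivity. Qed.

Lemma ball_rename (R : renaming VN) (G : G_) c k u :
  ball (rename R G) c k u <-> ball G (rn_inv R c) k (rn_inv R u).
Proof.
  revert u; induction k as [|k IH]; intro u; cbn [ball].
  - cbn [rename gV]; split; intros [h e]; split; auto.
    + subst; auto.
    + apply (rn_inv_inj R); auto.
  - split; intros [h|(w&hw&(i&j&he))]; try (left; apply IH; exact h); right.
    + exists (rn_inv R w); split; [apply IH; auto|]; exists i, j; exact he.
    + exists (rn R w); split; [apply IH; rewrite ?rn_Ki; auto|]; exists i, j.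
      unfold rename, rn_port; cbn; rewrite rn_Ki; exact he.
Qed.

Lemma rename_disk (R : renaming VN) (G : G_) r c :
  rename_pg R (disk G r c) = disk (rename R G) r (rn R c).
Proof.
  unfold rename_pg, disk; cbn [fst snd]; f_equal.
  apply graph_ext; cbn [rename disk_graph gV gE gsig gdel rn_port fst snd]; intros;
    rewrite ?ball_rename, ?rn_Ki; tauto.
Qed.

Lemma rename_wf (R : renaming VN) (G : G_) : wf G -> wf (rename R G).
Proof.
  intro W; apply wf_intro; cbn [rename gV gE gsig gdel].
  - destruct (wf_count W) as [g hg]; exists (fun u => g (rn_inv R u)); intros u v hu hv e.
    apply (rn_inv_inj R); apply hg; auto.
  - intros p q h; exact (wf_EV W (rn_port R p) (rn_port R q) h).
  - intros [p1 i] [q1 j] h e; injection e; intros; subst; eapply (wf_Eirr W); [exact h| reflexivity].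
  - intros p q h; eapply (wf_Esym W); exact h.
  - intros [p1 i] [q1 j] [q1' j'] h h'; assert (e : rn_port R (q1, j) = rn_port R (q1', j'))
      by (eapply (wf_Efun W); [exact h| exact h']).
    unfold rn_port in e; cbn in e; injection e; intros; subst; f_equal; apply (rn_inv_inj R); auto.
  - intros v s h; eapply (wf_sV W); exact h.
  - intros v s s' h h'; eapply (wf_sfun W); [exact h| exact h'].
  - intros p q d h; eapply (wf_dE W); exact h.
  - intros p q d h; eapply (wf_dsym W); exact h.
  - intros p q d d' h h'; eapply (wf_dfun W); [exact h| exact h'].
Qed.

Lemma is_disk_rename r (R : renaming VN) (D : PG_) : is_disk r D -> is_disk r (rename_pg R D).
Proof.
  intros (G&c&W&hc&->); rewrite rename_disk; apply is_disk_intro.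
  - apply rename_wf; auto.
  - cbn [rename gV]; rewrite rn_Ki; auto.
Qed.

Definition rinv (R : renaming VN) : renaming VN :=
  mkRenaming (rn_inv R) (rn R) (rn_Ki R) (rn_K R).

Lemma rename_rinv (R : renaming VN) (G : G_) : rename R (rename (rinv R) G) = G.
Proof.
  apply graph_ext; cbn [rename rinv gV gE gsig gdel rn_inv rn]; unfold rn_port; cbn;
  intros; rewrite ?rn_K; destruct_all (port VN Pi); cbn; rewrite ?rn_K; tauto.
Qed.

Lemma rinv_rename (R : renaming VN) (G : G_) : rename (rinv R) (rename R G) = G.
Proof.
  apply graph_ext; cbn [rename rinv gV gE gsig gdel rn_inv rn]; unfold rn_port; cbn;
  intros; rewrite ?rn_Ki; destruct_all (port VN Pi); cbn; rewrite ?rn_Ki; tauto.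
Qed.

Lemma rename_pg_rinv (R : renaming VN) (D : PG_) : rename_pg R (rename_pg (rinv R) D) = D.
Proof. destruct D as [G c]; unfold rename_pg; cbn; rewrite rename_rinv, rn_K; auto. Qed.

Lemma rinv_rename_pg (R : renaming VN) (D : PG_) : rename_pg (rinv R) (rename_pg R D) = D.
Proof. destruct D as [G c]; unfold rename_pg; cbn; rewrite rinv_rename, rn_Ki; auto. Qed.

Lemma subg_rename (R : renaming VN) (G H : G_) : subg G H -> subg (rename R G) (rename R H).
Proof. intros (a1&a2&a3&a4); repeat split; cbn [rename gV gE gsig gdel]; intros; auto. Qed.

Lemma subpg_rename (R : renaming VN) (D1 D2 : PG_) : subpg D1 D2 -> subpg (rename_pg R D1) (rename_pg R D2).
Proof. intros [h e]; split; cbn; [apply subg_rename; auto| congruence]. Qed.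


Lemma card_le_sub (P Q : VN -> Prop) n : card_le Q n -> (forall u, P u -> Q u) -> card_le P n.
Proof. intros (l&hl&hQ) h; exists l; split; auto. Qed.

Lemma card_le_mono (P : VN -> Prop) n n' : card_le P n -> n <= n' -> card_le P n'.
Proof. intros (l&hl&hQ) h; exists l; split; [lia| auto]. Qed.

Lemma card_le_or (P P1 P2 : VN -> Prop) n1 n2 : card_le P1 n1 -> card_le P2 n2 ->
  (forall u, P u -> P1 u \/ P2 u) -> card_le P (n1 + n2).
Proof.
  intros (l1&h1&q1) (l2&h2&q2) h; exists (l1 ++ l2); split.
  - rewrite length_app; lia.
  - intros u hu; apply in_or_app; destruct (h u hu); auto.
Qed.

Lemma card_le_union (A : Type) (l : list A) (Q : A -> VN -> Prop) n (P : VN -> Prop) :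
  (forall u, P u -> exists a, In a l /\ Q a u) -> (forall a, In a l -> card_le (Q a) n) ->
  card_le P (length l * n).
Proof.
  intros hP hQ.
  assert (exists L, length L <= length l * n /\ forall a u, In a l -> Q a u -> In u L) as (L&hL&hin).
  { clear hP; induction l as [|a l IH].
    - exists nil; split; [simpl; lia| intros a u []].
    - destruct (hQ a (or_introl eq_refl)) as (La&hLa&qa).
      destruct IH as (L'&hL'&q'); [intros; apply hQ; right; auto|].
      exists (La ++ L'); split; [rewrite length_app; simpl; lia|].
      intros b u [<-|hb] hu; apply in_or_app; [left; auto| right; eauto]. }
  exists L; split; auto. intros u hu; destruct (hP u hu) as (a&ha&hq); eauto.
Qed.

Fixpoint idx (l : list VN) (u : VN) : nat :=
  match l with
  | nil => 0
  | x :: l' => if excluded_middle_informative (x = u) then 0 else S (idx l' u)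
  end.

Lemma idx_inj l u v : In u l -> In v l -> idx l u = idx l v -> u = v.
Proof.
  induction l as [|x l IH]; simpl; [tauto|].
  destruct (excluded_middle_informative (x = u)) as [e1|n1];
  destruct (excluded_middle_informative (x = v)) as [e2|n2]; intros hu hv e; try congruence.
  apply IH; [destruct hu; congruence| destruct hv; congruence| congruence].
Qed.

Lemma card_le_count (P : VN -> Prop) n : card_le P n -> countable_set P.
Proof. intros (l&_&hl); exists (idx l); intros u v hu hv; apply idx_inj; auto. Qed.

Lemma adj_card (G : G_) (lp : list Pi) w : wf G -> (forall i, In i lp) ->
  card_le (adj G w) (length lp * 1).
Proof.
  intros W hlp.
  apply (card_le_union lp (fun i u => exists j, gE G (w, i) (u, j))).
  - intros u (i&j&h); exists i; split; eauto.
  - intros i _. destruct (classic (exists u j, gE G (w, i) (u, j))) as [(u&j&h)|hn].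
    + exists (u :: nil); split; [simpl; lia|]. intros u' (j'&h').
      assert (e : (u', j') = (u, j)) by (eapply (wf_Efun W); [exact h'| exact h]).
      injection e; intros; subst; simpl; auto.
    + exists nil; split; [simpl; lia|]. intros u' (j'&h'); exfalso; eauto.
Qed.

Fixpoint Bd (m k : nat) : nat :=
  match k with 0 => 1 | S k => Bd m k + Bd m k * m end.

Lemma ball_card (G : G_) (lp : list Pi) c k : wf G -> (forall i, In i lp) ->
  card_le (ball G c k) (Bd (length lp) k).
Proof.
  intros W hlp; induction k as [|k IH].
  - exists (c :: nil); split; [simpl; lia|]. intros u [_ e]; subst; simpl; auto.
  - cbn [Bd]. apply (card_le_or (ball G c (S k)) (P1:=ball G c k)
                   (P2:=fun u => exists w, ball G c k w /\ adj G w u)); [exact IH| |intros u hu; exact hu].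
    + destruct IH as (L&hL&hin).
      apply (card_le_mono (P:=fun u => exists w, ball G c k w /\ adj G w u) (n:=length L * (length lp * 1))).
      * apply (card_le_union L (fun w u => adj G w u)).
        -- intros u (w&hw&ha); exists w; auto.
        -- intros a _; apply adj_card; auto.
      * rewrite Nat.mul_1_r; apply Nat.mul_le_mono_r; auto.
Qed.


Definition functional (W : G_) : Prop :=
  (forall p q q', gE W p q -> gE W p q' -> q = q') /\
  (forall v s s', gsig W v s -> gsig W v s' -> s = s') /\
  (forall p q d d', gdel W p q d -> gdel W p q d' -> d = d').

Lemma consistent_sub (W A B : G_) : functional W -> subg A W -> subg B W -> consistent A B.
Proof.
  intros (f1&f2&f3) (a1&a2&a3&a4) (b1&b2&b3&b4); split; [|split].
  - intros p q q' h h'; apply (f1 p); [destruct h|destruct h']; auto.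
  - intros v s s' h h'; apply (f2 v); auto.
  - intros p q d d' h h'; apply (f3 p q); auto.
Qed.

Section Main.
Variables (F : G_ -> G_) (r : nat) (f : PG_ -> G_).
Hypothesis Hf : local_rule_of F r f.
Hypothesis HM : monotonic_F F.

Lemma F_eq G : wf G -> F G = bigcup (gV G) (fun v => f (disk G r v)).
Proof. apply (proj2 Hf). Qed.

Lemma f_wf D : is_disk r D -> wf (f D).
Proof. apply (proj1 (proj1 Hf)). Qed.

Lemma F_functional G : wf G -> functional (F G).
Proof.
  intro W; rewrite (F_eq W).
  pose proof (proj2 (proj2 (proj2 (proj2 (proj1 Hf))))) as Hc.
  split; [|split]; cbn [bigcup gE gsig gdel].
  - intros p q q' (u&hu&h) (v&hv&h'). destruct (Hc G u v W hu hv) as (c1&_&_).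
    apply (c1 p); auto.
  - intros x s s' (u&hu&h) (v&hv&h'). destruct (Hc G u v W hu hv) as (_&c2&_).
    apply (c2 x); auto.
  - intros p q d d' (u&hu&h) (v&hv&h'). destruct (Hc G u v W hu hv) as (_&_&c3).
    apply (c3 p q); auto.
Qed.

Lemma f_sub_F D G : is_disk r D -> wf G -> subg (fst D) G -> subg (f D) (F G).
Proof.
  intros hD W S.
  apply subg_trans with (F (fst D)); [| apply HM; auto; eapply is_disk_wf; eauto].
  rewrite (F_eq (is_disk_wf hD)).
  rewrite <- (is_disk_self hD) at 1.
  apply (sub_bigcup (gV (fst D)) (fun v => f (disk (fst D) r v)) (snd D)).
  eapply is_disk_center; eauto.
Qed.

Definition fmono (D : PG_) : G_ := bigcup (fun D' => is_disk r D' /\ subpg D' D) f.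

Lemma fmono_sub_F D G : wf G -> subg (fst D) G -> subg (fmono D) (F G).
Proof.
  intros W S; apply bigcup_lub; intros D' [hD' [s _]].
  apply f_sub_F; auto; eapply subg_trans; eauto.
Qed.


Lemma fmono_F G : wf G -> F G = bigcup (gV G) (fun v => fmono (disk G r v)).
Proof.
  intro W; apply subg_antisym.
  - rewrite (F_eq W); apply bigcup_lub; intros v hv.
    eapply subg_trans; [| apply (sub_bigcup (gV G) (fun v => fmono (disk G r v)) v hv)].
    apply (sub_bigcup (fun D' => is_disk r D' /\ subpg D' (disk G r v)) f (disk G r v)).
    split; [apply is_disk_intro; auto| apply subpg_refl].
  - apply bigcup_lub; intros v hv; apply fmono_sub_F; auto; apply disk_sub; auto.
Qed.

Lemma fmono_bound (lp : list Pi) : (forall i, In i lp) ->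
  exists N, forall D, is_disk r D -> card_le (gV (fmono D)) N.
Proof.
  intro hlp. destruct (proj1 (proj2 (proj2 (proj2 (proj1 Hf))))) as [n hn].
  exists (Bd (length lp) (S r) * n). intros D hD.
  pose proof (is_disk_wf hD) as WD.
  destruct hD as (K&c&WK&hc&eD).
  assert (hb : card_le (ball K c (S r)) (Bd (length lp) (S r))) by (apply ball_card; auto).
  destruct hb as (L&hL&hin).
  apply (card_le_mono (n:=length L * n)); [| apply Nat.mul_le_mono_r; auto].
  apply (card_le_union L (fun v u => gV (fst D) v /\ gV (f (disk (fst D) r v)) u)).
  - intros u hu.
    assert (h : gV (F (fst D)) u).
    { destruct (fmono_sub_F D WD (subg_refl _)) as (a1&_); auto. }
    rewrite (F_eq WD) in h. destruct h as (v&hv&h).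
    exists v; split; auto. apply hin. rewrite eD in hv; exact hv.
  - intros v _. destruct (classic (gV (fst D) v)) as [hv|hv].
    + apply (card_le_sub _ (Q:=gV (f (disk (fst D) r v)))); [| tauto].
      apply hn; apply is_disk_intro; auto.
    + exists nil; split; [simpl; lia| tauto].
Qed.

Lemma fmono_wf (lp : list Pi) D : (forall i, In i lp) -> is_disk r D -> wf (fmono D).
Proof.
  intros hlp hD. pose proof (is_disk_wf hD) as WD.
  pose proof (F_functional WD) as (f1&f2&f3).
  pose proof (fmono_sub_F D WD (subg_refl _)) as (a1&a2&a3&a4).
  apply wf_intro.
  - destruct (fmono_bound lp hlp) as [N hN]; eapply card_le_count; eauto.
  - intros p q (D'&[hD' hs]&h); pose proof (wf_EV (f_wf hD') p q h) as [x y].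
    split; exists D'; auto.
  - intros p q (D'&[hD' _]&h); eapply (wf_Eirr (f_wf hD')); exact h.
  - intros p q (D'&hD'&h); exists D'; split; auto; eapply (wf_Esym (f_wf (proj1 hD'))); exact h.
  - intros p q q' h h'; apply (f1 p); auto.
  - intros v s (D'&hD'&h); exists D'; split; auto; eapply (wf_sV (f_wf (proj1 hD'))); exact h.
  - intros v s s' h h'; apply (f2 v); auto.
  - intros p q d (D'&hD'&h); exists D'; split; auto; eapply (wf_dE (f_wf (proj1 hD'))); exact h.
  - intros p q d (D'&hD'&h); exists D'; split; auto; eapply (wf_dsym (f_wf (proj1 hD'))); exact h.
  - intros p q d d' h h'; apply (f3 p q); auto.
Qed.

Lemma fmono_monotone : monotonic_rule r fmono.
Proof.
  intros D1 D2 _ _ s12; apply bigcup_lub; intros D' [hD' s'].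
  apply (sub_bigcup (fun D' => is_disk r D' /\ subpg D' D2) f D'); split; auto.
  eapply subpg_trans; eauto.
Qed.

Lemma fmono_consistent G u v : wf G -> gV G u -> gV G v ->
  consistent (fmono (disk G r u)) (fmono (disk G r v)).
Proof.
  intros W hu hv; apply (consistent_sub (F_functional W)); apply fmono_sub_F; auto; apply disk_sub; auto.
Qed.


Lemma rename_bigcup_lub (I : Type) (P : I -> Prop) (Gs : I -> G_) (R : renaming VN) W :
  (forall i, P i -> subg (rename R (Gs i)) W) -> subg (rename R (bigcup P Gs)) W.
Proof.
  intros H; split; [|split; [|split]]; cbn [rename bigcup gV gE gsig gdel]; intros;
  match goal with h : exists _, _ |- _ => destruct h as (i & Pi' & Hx) end;
  destruct (H i Pi') as (a1&a2&a3&a4); [apply a1|apply a2|apply a3|apply a4]; exact Hx.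
Qed.

Lemma fmono_rename (R : renaming VN) : exists R' : renaming VN,
  forall D, is_disk r D -> fmono (rename_pg R D) = rename R' (fmono D).
Proof.
  destruct (proj1 (proj2 (proj1 Hf)) R) as [R' hR]. exists R'. intros D hD.
  apply subg_antisym.
  - apply bigcup_lub; intros D'' [hD'' s''].
    assert (hX : is_disk r (rename_pg (rinv R) D'')) by (apply is_disk_rename; auto).
    rewrite <- (rename_pg_rinv R D''), (hR _ hX).
    apply subg_rename.
    apply (sub_bigcup (fun D' => is_disk r D' /\ subpg D' D) f (rename_pg (rinv R) D'')).
    split; auto. rewrite <- (rinv_rename_pg R D). apply subpg_rename; auto.
  - apply rename_bigcup_lub; intros D' [hD' s'].
    rewrite <- (hR _ hD').
    apply (sub_bigcup (fun X => is_disk r X /\ subpg X (rename_pg R D)) f (rename_pg R D')).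
    split; [apply is_disk_rename; auto| apply subpg_rename; auto].
Qed.

Lemma empty_sub (X : G_) : subg empty_graph X.
Proof. unfold subg; cbn; tauto. Qed.

Lemma choose_fam (I : Type) (Q : I -> PG_ -> Prop) :
  (forall k, exists D, Q k D) -> exists g : I -> PG_, forall k, Q k (g k).
Proof.
  intros h; exists (fun k => proj1_sig (constructive_indefinite_description _ (h k))).
  intro k; exact (proj2_sig (constructive_indefinite_description _ (h k))).
Qed.

Lemma fmono_cap (I : Type) (Ds : I -> PG_) :
  (forall k, is_disk r (Ds k)) ->
  bigcap (fun k => fst (Ds k)) = empty_graph ->
  bigcap (fun k => fmono (Ds k)) = empty_graph.
Proof.
  intros hDs Hemp.
  pose proof (proj1 (proj2 (proj2 (proj1 Hf)))) as Hcap.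
  assert (key : forall D' : I -> PG_, (forall k, is_disk r (D' k) /\ subpg (D' k) (Ds k)) ->
            bigcap (fun k => f (D' k)) = empty_graph).
  { intros D' hD'. apply Hcap; [intro k; apply hD'|].
    apply subg_antisym; [|apply empty_sub].
    split; [|split; [|split]]; cbn [bigcap gV gE gsig gdel]; intros.
    - assert (h : gV (bigcap (fun k => fst (Ds k))) u).
      { intro k; destruct (hD' k) as [_ [(a1&_) _]]; auto. }
      rewrite Hemp in h; destruct h.
    - assert (h : gE (bigcap (fun k => fst (Ds k))) p q).
      { intro k; destruct (hD' k) as [_ [(_&a2&_) _]]; auto. }
      rewrite Hemp in h; destruct h.
    - assert (h : gsig (bigcap (fun k => fst (Ds k))) v s).
      { intro k; destruct (hD' k) as [_ [(_&_&a3&_) _]]; auto. }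
      rewrite Hemp in h; destruct h.
    - assert (h : gdel (bigcap (fun k => fst (Ds k))) p q d).
      { intro k; destruct (hD' k) as [_ [(_&_&_&a4) _]]; auto. }
      rewrite Hemp in h; destruct h. }
  apply subg_antisym; [|apply empty_sub].
  split; [|split; [|split]]; cbn [bigcap gV gE gsig gdel]; intros;
  match goal with h : forall i : I, _ |- _ =>
    destruct (choose_fam _ h) as [g hg] end;
  (assert (hk : forall k, is_disk r (g k) /\ subpg (g k) (Ds k)) by (intro k; apply hg));
  pose proof (key g hk) as e.
  - assert (h : gV (bigcap (fun k => f (g k))) u) by (intro k; apply hg).
    rewrite e in h; destruct h.
  - assert (h : gE (bigcap (fun k => f (g k))) p q) by (intro k; apply hg).
    rewrite e in h; destruct h.
  - assert (h : gsig (bigcap (fun k => f (g k))) v s) by (intro k; apply hg).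
    rewrite e in h; destruct h.
  - assert (h : gdel (bigcap (fun k => f (g k))) p q d) by (intro k; apply hg).
    rewrite e in h; destruct h.
Qed.

End Main.
End Aux.

Theorem proposition2p9 (VN Sigma Delta Pi : Type)
  (HVN : ~ exists g : VN -> nat, forall u v, g u = g v -> u = v)
  (HPi : exists l : list Pi, forall i, In i l)
  (F : graph VN Sigma Delta Pi -> graph VN Sigma Delta Pi)
  (HF : is_CGD F) :
  monotonic_F F <->
  exists (r : nat) (f : pgraph VN Sigma Delta Pi -> graph VN Sigma Delta Pi),
    local_rule_of F r f /\ monotonic_rule r f.
Proof.
  split.
  - intro HM. destruct HF as (r & f & Hf). destruct HPi as [lp hlp].
    exists r, (fmono r f). split; [| apply fmono_monotone].
    split.
    + split; [intros D hD; eapply fmono_wf; eauto|].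
      split; [intro R; eapply fmono_rename; eauto|].
      split; [intros I Ds hDs he; eapply fmono_cap; eauto|].
      split; [eapply fmono_bound; eauto|].
      intros G u v W hu hv; eapply fmono_consistent; eauto.
    + intros G W; eapply fmono_F; eauto.
  - intros (r&f&[[_ HF2] Hmon]) G H WG WH S.
    rewrite (HF2 G WG), (HF2 H WH). apply bigcup_lub; intros v hv.
    assert (hvH : gV H v) by (apply (proj1 S); exact hv).
    eapply subg_trans; [| apply (sub_bigcup (gV H) (fun v => f (disk H r v)) v hvH)].
    apply Hmon; [apply is_disk_intro; auto | apply is_disk_intro; auto |].
    split; [apply disk_mono; auto| reflexivity].
Qed.
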